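(* Consider a homogeneous controlled queueing network $\{X_n,n\ge 0\}$ on $\mathcal{S}=\mathbb{Z}_+^M$ with action drift matrix $\mathbf{D}$. Suppose that $\mathrm{rank}(\mathbf{D})<M$ and that the following non-degeneracy condition holds: the system $\mathbf{D}\boldsymbol{\alpha}=\mathbf{0}$ has a solution $\boldsymbol{\alpha}\in\mathbb{R}^M$ such that for every $\mathbf{x}\in\mathcal{S}$ and every $a\in\mathcal{A}(\mathbf{x})$, $\mathbb{P}_a(\boldsymbol{\alpha}'X_1\neq\boldsymbol{\alpha}'\mathbf{x}\mid X_0=\mathbf{x})>0$. Then the network is non-stabilizable.
   Context: A homogeneous controlled queueing network is a controlled discrete-time Markov chain $\{X_n,n\ge0\}$ with state space $\mathcal{S}=\mathbb{Z}_+^M$. For each $\mathbf{z}\in\mathcal{S}$, $\mathcal{A}(\mathbf{z})$ is the set of actions available at $\mathbf{z}$, and $\mathcal{A}=\bigcup_{\mathbf{z}}\mathcal{A}(\mathbf{z})=\{a_1,\dots,a_L\}$ is finite. A (deterministic stationary) policy is a function $\mathcal{P}:\mathcal{S}\to\mathcal{A}$ with $\mathcal{P}(\mathbf{z})\in\mathcal{A}(\mathbf{z})$; under any policy $X_n\in\mathcal{S}$ for all $n$. When action $a$ is taken in state $\mathbf{z}$, transitions follow $\mathbb{P}_a(X_{n+1}=\cdot\mid X_n=\mathbf{z})$, and homogeneity means $\tilde P_a(\mathbf{x}):=\mathbb{P}_a(X_{n+1}-\mathbf{z}=\mathbf{x}\mid X_n=\mathbf{z})$ does not depend on $\mathbf{z}$.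 With $\mathbf{e}_i$ the canonical row vectors of $\mathbb{R}^M$, the set $\mathcal{D}=\{\mathbf{x}:\tilde P_a(\mathbf{x})>0\text{ for some }a\in\mathcal{A}\}$ consists only of vectors of the forms $\mathbf{e}_i$, $-\mathbf{e}_i$, or $\mathbf{e}_i-\mathbf{e}_j$ with $i\neq j$. The drift vector of action $a_i$ is $\boldsymbol{\Delta}_i=\mathbb{E}_{a_i}[X_{n+1}-X_n\mid X_n]=\sum_{\mathbf{x}}\mathbf{x}\,\tilde P_{a_i}(\mathbf{x})$, and the action drift matrix $\mathbf{D}$ is the $L\times M$ matrix with rows $\boldsymbol{\Delta}_i'$, $i=1,\dots,L$. The network is non-stabilizable if there is no policy under which the chain has a positive recurrent class that is reached with probability 1. *)

(* Defs.v *)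
From HB Require Import structures.
From mathcomp Require Import all_boot all_order all_algebra.
From mathcomp Require Import all_classical all_reals all_analysis.
Set Implicit Arguments. Unset Strict Implicit. Unset Printing Implicit Defensive.
Import Order.TTheory GRing.Theory Num.Theory.
Import numFieldNormedType.Exports.
Local Open Scope classical_set_scope.
Local Open Scope ring_scope.

Section QN.
Variables (R : realType) (M L : nat).

Definition state := {ffun 'I_M -> nat}.

(* Jumps: (Some i, None) = e_i ; (None, Some k) = -e_k ; (Some i, Some k) = e_i - e_k *)
Definition jump := (option 'I_M * option 'I_M)%type.

Definition valid_jump (j : jump) : bool :=
  match j with
  | (None, None) => false
  | (Some i, Some k) => i != k
  | _ => true
  end.

Definition jvec (j : jump) (i : 'I_M) : int :=
  (j.1 == Some i)%:Z - (j.2 == Some i)%:Z.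

(* the state z + jvec j (exact whenever the jump is feasible at z) *)
Definition move (z : state) (j : jump) : state :=
  [ffun i => absz ((z i)%:Z + jvec j i)].

(* actions are 'I_L = {a_1,...,a_L};  Pt a j = tilde P_a(jvec j);  Aset z = A(z) *)
Variables (Pt : 'I_L -> jump -> R) (Aset : state -> {set 'I_L}).

Definition qn_model : Prop :=
  [/\ (forall a j, 0 <= Pt a j),
      (forall a, \sum_(j : jump) Pt a j = 1),
      (forall a j, 0 < Pt a j -> valid_jump j),
      (forall z a j, a \in Aset z -> 0 < Pt a j -> forall i, 0 <= (z i)%:Z + jvec j i)
    & ((forall z, Aset z != finset.set0) /\ (forall a, exists z, a \in Aset z))].

Definition drift_matrix : 'M[R]_(L, M) :=
  \matrix_(a < L, i < M) \sum_(j : jump) Pt a j * (jvec j i)%:~R.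

Definition lin (alpha : 'cV[R]_M) (z : state) : R :=
  \sum_(i < M) alpha i ord0 * (z i)%:R.

Definition prob_change (alpha : 'cV[R]_M) (x : state) (a : 'I_L) : R :=
  \sum_(j : jump | lin alpha (move x j) != lin alpha x) Pt a j.

Definition policy := state -> 'I_L.

Definition admissible (pol : policy) : Prop := forall z, pol z \in Aset z.

Section Chain.
Variable pol : policy.

Fixpoint hit_within (C : set state) (n : nat) (z : state) : R :=
  match n with
  | 0 => if z \in C then 1 else 0
  | n'.+1 => if z \in C then 1
             else \sum_(j : jump) Pt (pol z) j * hit_within C n' (move z j)
  end.

Fixpoint first_visit (y : state) (n : nat) (z : state) : R :=
  match n with
  | 0 => if z == y then 1 else 0
  | n'.+1 => if z == y then 0
             else \sum_(j : jump) Pt (pol z) j * first_visit y n' (move z j)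
  end.

Definition first_return (y : state) (n : nat) : R :=
  match n with
  | 0 => 0
  | n'.+1 => \sum_(j : jump) Pt (pol y) j * first_visit y n' (move y j)
  end.

Definition pos_recurrent (y : state) : Prop :=
  ((fun N : nat => \sum_(n < N) first_return y n) @ \oo --> (1 : R)) /\
  cvgn (fun N : nat => \sum_(n < N) (n%:R * first_return y n)).

Definition reaches (y y' : state) : Prop := exists n, 0 < hit_within [set y'] n y.
Definition communicate (y y' : state) : Prop := reaches y y' /\ reaches y' y.

Definition pos_rec_class (C : set state) : Prop :=
  [/\ C !=set0,
      (forall y y', C y -> C y' -> communicate y y'),
      (forall y z, C y -> communicate y z -> C z)
    & (forall y, C y -> pos_recurrent y)].

Definition reached_as (C : set state) : Prop :=
  forall z, (fun n : nat => hit_within C n z) @ \oo --> (1 : R).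

End Chain.

Definition stabilizable : Prop :=
  exists pol : policy, admissible pol /\
    exists C : set state, pos_rec_class pol C /\ reached_as pol C.

Definition non_stabilizable : Prop := ~ stabilizable.

End QN.

(* Main.v *)
Set Warnings "-all".
Require Import Defs.
From HB Require Import structures.
From mathcomp Require Import all_boot all_order all_algebra.
From mathcomp Require Import all_classical all_reals all_analysis.
Import Order.TTheory GRing.Theory Num.Theory.
Import numFieldNormedType.Exports.
Local Open Scope ring_scope.
Set Implicit Arguments. Unset Strict Implicit.
From mathcomp Require Import lra.

Lemma in_set1_eq (M : nat) (z y : state M) : (z \in [set y]%classic) = (z == y).
Proof. by apply/idP/eqP; rewrite inE. Qed.

Lemma hit_bounds (R : realType) (M L : nat) (Pt : 'I_L -> jump M -> R)
  (pol : policy M L) (y : state M) :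
  (forall a j, 0 <= Pt a j) -> (forall a, \sum_(j : jump M) Pt a j = 1) ->
  forall k z, 0 <= hit_within Pt pol [set y]%classic k z <= 1.
Proof.
move=> h0 h1; elim=> [|k IH] z /=; first by case: ifP => _; rewrite ?lexx ?ler01.
case: ifP => _; first by rewrite lexx ler01.
apply/andP; split.
  by apply: sumr_ge0 => j _; apply: mulr_ge0 => //; case/andP: (IH (move z j)).
rewrite -(h1 (pol z)); apply: ler_sum => j _.
rewrite -{2}(mulr1 (Pt _ j)); apply: ler_wpM2l => //; by case/andP: (IH (move z j)).
Qed.

Lemma fv_ge0 (R : realType) (M L : nat) (Pt : 'I_L -> jump M -> R)
  (pol : policy M L) (y : state M) :
  (forall a j, 0 <= Pt a j) -> forall n z, 0 <= first_visit Pt pol y n z.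
Proof.
move=> h0; elim=> [|n IH] z /=; first by case: ifP.
case: ifP => // _; apply: sumr_ge0 => j _; exact: mulr_ge0.
Qed.

Lemma hit_fv (R : realType) (M L : nat) (Pt : 'I_L -> jump M -> R)
  (pol : policy M L) (y : state M) :
  (forall a, \sum_(j : jump M) Pt a j = 1) ->
  forall k z, hit_within Pt pol [set y]%classic k z =
              \sum_(n < k.+1) first_visit Pt pol y n z.
Proof.
move=> h1; elim=> [|k IH] z /=.
  by rewrite big_ord1 /= in_set1_eq.
rewrite big_ord_recl /= in_set1_eq.
case: eqP => [_|nzy].
  by rewrite big1 ?addr0.
rewrite add0r.
rewrite exchange_big /=; apply: eq_bigr => j _.
by rewrite IH mulr_sumr; apply: eq_bigr => i _; rewrite add0n.
Qed.

Fixpoint est (R : realType) (M L : nat) (Pt : 'I_L -> jump M -> R)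
  (pol : policy M L) (y : state M) (g : state M -> R) (k : nat) (z : state M) : R :=
  match k with
  | 0 => g z
  | k'.+1 => if z == y then g z
             else \sum_(j : jump M) Pt (pol z) j * est Pt pol y g k' (move z j)
  end.
Arguments est [R M L] Pt pol y g k z.

Lemma est_mart (R : realType) (M L : nat) (Pt : 'I_L -> jump M -> R)
  (pol : policy M L) (y : state M) (g : state M -> R) :
  (forall z, \sum_(j : jump M) Pt (pol z) j * g (move z j) = g z) ->
  forall k z, est Pt pol y g k z = g z.
Proof.
move=> hm; elim=> [|k IH] z //=.
case: ifP => // _; rewrite -hm; apply: eq_bigr => j _; by rewrite IH.
Qed.

Lemma est_bound (R : realType) (M L : nat) (Pt : 'I_L -> jump M -> R)
  (pol : policy M L) (y : state M) (g : state M -> R) (K : R) :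
  (forall a j, 0 <= Pt a j) -> (forall a, \sum_(j : jump M) Pt a j = 1) ->
  0 <= K -> g y = 0 ->
  (forall z j, 0 < Pt (pol z) j -> `|g (move z j)| <= `|g z| + K) ->
  forall k z, `|est Pt pol y g k z| <=
     (`|g z| + K * k%:R) * (1 - hit_within Pt pol [set y]%classic k z).
Proof.
move=> h0 h1 hK hgy hb; elim=> [|k IH] z /=.
  rewrite in_set1_eq mulr0 addr0; case: eqP => [->|_].
    by rewrite hgy normr0 subrr mulr0.
  by rewrite subr0 mulr1.
rewrite in_set1_eq; case: eqP => [->|_].
  by rewrite hgy normr0 subrr mulr0.
apply: (le_trans (ler_norm_sum _ _ _)).
have -> : 1 - \sum_(j : jump M) Pt (pol z) j * hit_within Pt pol [set y]%classic k (move z j)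
   = \sum_(j : jump M) Pt (pol z) j * (1 - hit_within Pt pol [set y]%classic k (move z j)).
  by rewrite -{1}(h1 (pol z)) -sumrB; apply: eq_bigr => j _; rewrite mulrBr mulr1.
rewrite mulr_sumr; apply: ler_sum => j _.
rewrite normrM ger0_norm //.
have := h0 (pol z) j; rewrite le_eqVlt => /orP [/eqP <-|hp]; first by rewrite !mul0r mulr0.
rewrite mulrCA; apply: ler_wpM2l => //.
apply: (le_trans (IH (move z j))).
have /andP [_ hH1] := hit_bounds pol y h0 h1 k (move z j).
apply: ler_wpM2r; first by rewrite subr_ge0.
rewrite -natr1 mulrDr mulr1 addrA (addrAC _ _ K) lerD2r.
exact: hb.
Qed.
Lemma fr_ge0 (R : realType) (M L : nat) (Pt : 'I_L -> jump M -> R)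
  (pol : policy M L) (y : state M) :
  (forall a j, 0 <= Pt a j) -> forall n, 0 <= first_return Pt pol y n.
Proof.
move=> h0 [|n] //=; apply: sumr_ge0 => j _; apply: mulr_ge0 => //; exact: fv_ge0.
Qed.

Lemma fr_sum (R : realType) (M L : nat) (Pt : 'I_L -> jump M -> R)
  (pol : policy M L) (y : state M) :
  (forall a, \sum_(j : jump M) Pt a j = 1) -> forall k,
  \sum_(n < k.+2) first_return Pt pol y n =
  \sum_(j : jump M) Pt (pol y) j * hit_within Pt pol [set y]%classic k (move y j).
Proof.
move=> h1 k; rewrite big_ord_recl /= add0r.
under [RHS]eq_bigr => j _ do rewrite (hit_fv pol y h1) mulr_sumr.
by rewrite exchange_big.
Qed.

Lemma v_ineq (R : realType) (f : nat -> R) :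
  (forall n, 0 <= f n) -> forall m t,
  m%:R * (\sum_(n < m + t) f n - \sum_(n < m) f n) <=
  \sum_(n < m + t) n%:R * f n - \sum_(n < m) n%:R * f n.
Proof.
move=> hf m; elim=> [|t IH]; first by rewrite addn0 !subrr mulr0.
rewrite addnS !big_ord_recr /= (addrAC _ (f _)) (addrAC _ (_ * f _)) mulrDr.
apply: lerD => //.
apply: ler_wpM2r => //; rewrite ler_nat; exact: leq_addr.
Qed.
Lemma lin_move (R : realType) (M : nat) (alpha : 'cV[R]_M) (z : state M) (j : jump M) :
  (forall i, 0 <= (z i)%:Z + jvec j i) ->
  lin alpha (move z j) = lin alpha z + \sum_(i < M) alpha i ord0 * (jvec j i)%:~R.
Proof.
move=> hf; rewrite /lin -big_split /=; apply: eq_bigr => i _.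
rewrite ffunE -mulrDr.
have -> : ((absz ((z i)%:Z + jvec j i))%:R : R) = ((z i)%:Z + jvec j i)%:~R.
  by rewrite -[LHS]/(((absz ((z i)%:Z + jvec j i))%:Z)%:~R) gez0_abs.
by rewrite intrD.
Qed.

Lemma jvec_le1 (R : realType) (M : nat) (j : jump M) (i : 'I_M) :
  `|(jvec j i)%:~R : R| <= 1.
Proof.
rewrite /jvec; case: (_ == _); case: (_ == _) => /=; rewrite ?subrr ?normr0 ?ler01 //.
- by rewrite subr0 normr1.
- by rewrite sub0r normrN normr1.
Qed.

Lemma lin_move_bound (R : realType) (M : nat) (alpha : 'cV[R]_M) (z : state M)
  (j : jump M) (c : R) :
  (forall i, 0 <= (z i)%:Z + jvec j i) ->
  `|lin alpha (move z j) - c| <= `|lin alpha z - c| + \sum_(i < M) `|alpha i ord0|.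
Proof.
move=> hf; rewrite lin_move // addrAC.
apply: (le_trans (ler_normD _ _)); apply: lerD => //.
apply: (le_trans (ler_norm_sum _ _ _)); apply: ler_sum => i _.
rewrite normrM -{2}(mulr1 `|alpha i ord0|); apply: ler_wpM2l => //; exact: jvec_le1.
Qed.

Lemma lin_mart (R : realType) (M L : nat) (Pt : 'I_L -> jump M -> R)
  (Aset : state M -> {set 'I_L}) (alpha : 'cV[R]_M) (z : state M) (a : 'I_L) :
  qn_model Pt Aset -> drift_matrix Pt *m alpha = 0 -> a \in Aset z ->
  \sum_(j : jump M) Pt a j * lin alpha (move z j) = lin alpha z.
Proof.
move=> [h0 h1 _ hfeas _] hD ha.
have -> : \sum_(j : jump M) Pt a j * lin alpha (move z j) =
   \sum_(j : jump M) Pt a j * (lin alpha z + \sum_(i < M) alpha i ord0 * (jvec j i)%:~R).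
  apply: eq_bigr => j _.
  have := h0 a j; rewrite le_eqVlt => /orP [/eqP <-|hp]; first by rewrite !mul0r.
  by rewrite lin_move // => i; exact: hfeas hp i.
under eq_bigr => j _ do rewrite mulrDr.
rewrite big_split /= -mulr_suml h1 mul1r.
have : (drift_matrix Pt *m alpha) a ord0 = 0 by rewrite hD mxE.
rewrite !mxE => hs.
rewrite -[RHS]addr0; congr (_ + _); apply: etrans hs; symmetry.
under eq_bigr => j _ do rewrite mulr_sumr.
rewrite exchange_big /=; apply: eq_bigr => i _; rewrite mxE mulr_suml.
by apply: eq_bigr => j _; rewrite mulrCA mulrC.
Qed.
Lemma fin_contra (R : realType) (eta PAB P1B P1A D : R) : 0 < eta -> PAB = P1B - P1A ->
  PAB <= D -> D < eta / 4 + eta / 4 -> P1A < eta / 2 -> eta <= P1B -> False.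
Proof. move=> *; lra. Qed.

Unset Implicit Arguments.
Theorem theorem2 (R : realType) (M L : nat)
  (Pt : 'I_L -> jump M -> R) (Aset : state M -> {set 'I_L}) :
  qn_model Pt Aset ->
  (\rank (drift_matrix Pt) < M)%N ->
  (exists alpha : 'cV[R]_M, drift_matrix Pt *m alpha = 0 /\
     (forall (x : state M) (a : 'I_L), a \in Aset x -> 0 < prob_change Pt alpha x a)) ->
  non_stabilizable Pt Aset.
Proof.
move=> hqn _ [alpha [hD hpc]] [pol [hadm [C [[[y Cy] _ _ hrec] _]]]].
have [h0 h1 _ hfeas _] := hqn.
have [hu hv] := hrec y Cy.
set u := (fun N : nat => \sum_(n < N) first_return Pt pol y n) in hu.
set v := (fun N : nat => \sum_(n < N) (n%:R * first_return Pt pol y n)) in hv.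
set m := limn v.
have hv' : (v @ \oo --> m)%classic by [].
have [j0 /andP [hj0 hp0]] :
    exists j0, (lin alpha (move y j0) != lin alpha y) && (0 < Pt (pol y) j0).
  case: (pickP (fun j => (lin alpha (move y j) != lin alpha y) && (0 < Pt (pol y) j)))
    => [j0 hj0 | hn]; first by exists j0.
  have := hpc y (pol y) (hadm y); rewrite /prob_change ltNge => /negP; case.
  apply: sumr_le0 => j hj; move: (hn j); rewrite hj /= => /negbT; rewrite -leNgt //.
set g := fun z => lin alpha z - lin alpha y.
set K := \sum_(i < M) `|alpha i ord0|.
have hK : 0 <= K by apply: sumr_ge0.
have hgy : g y = 0 by rewrite /g subrr.
have hmart : forall z, \sum_(j : jump M) Pt (pol z) j * g (move z j) = g z.
  move=> z; rewrite /g; under eq_bigr => j _ do rewrite mulrBr.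
  by rewrite sumrB -mulr_suml h1 mul1r (lin_mart hqn hD (hadm z)).
have hb : forall z j, 0 < Pt (pol z) j -> `|g (move z j)| <= `|g z| + K.
  move=> z j hp; apply: lin_move_bound => i; exact: hfeas (hadm z) hp i.
set z0 := move y j0.
set d := `|g z0|.
have hd : 0 < d by rewrite normr_gt0 /g subr_eq0.
set H := fun k z => hit_within Pt pol [set y]%classic k z.
have hkey : forall k, d <= (d + K * k%:R) * (1 - H k z0).
  move=> k; have := est_bound h0 h1 hK hgy hb k z0.
  by rewrite est_mart.
have hHb := hit_bounds pol y h0 h1.
have hQ : forall k, 1 - u k.+2 =
    \sum_(j : jump M) Pt (pol y) j * (1 - H k (move y j)).
  move=> k; rewrite /u fr_sum // -{1}(h1 (pol y)) -sumrB.
  by apply: eq_bigr => j _; rewrite mulrBr mulr1.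
have hQ0 : forall k, Pt (pol y) j0 * (1 - H k z0) <= 1 - u k.+2.
  move=> k; rewrite hQ (bigD1 j0) //= lerDl; apply: sumr_ge0 => j _.
  apply: mulr_ge0 => //; rewrite subr_ge0; by case/andP: (hHb k (move y j)).
have hH0 : forall k, 0 <= 1 - H k z0.
  by move=> k; rewrite subr_ge0; case/andP: (hHb k z0).
set p0 := Pt (pol y) j0.
set eta := p0 * d / (d + K).
have hdK : 0 < d + K by apply: ltr_wpDr.
have heta : 0 < eta by rewrite /eta divr_gt0 // mulr_gt0.
have hmain : forall k, eta <= (k.+2)%:R * (1 - u k.+2).
  move=> k; rewrite /eta ler_pdivrMr //.
  have h1k := hkey k; have h2k := hQ0 k; have h3k := hH0 k.
  have hk : (d + K * k%:R) <= (k.+2)%:R * (d + K).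
    have hk0 : 0 <= k%:R :> R by [].
    have hdd : 0 <= d by apply: ltW.
    have hkd : 0 <= k%:R * d by apply: mulr_ge0.
    rewrite -!natr1; nra.
  have hp : 0 <= p0 := h0 (pol y) j0.
  have hkk : 0 <= K * k%:R by apply: mulr_ge0.
  set X := 1 - H k z0 in h1k h2k h3k.
  set Y := 1 - u k.+2 in h2k *.
  set Z := d + K * k%:R in h1k hk hkk.
  have hY : 0 <= Y by apply: le_trans h2k; apply: mulr_ge0.
  have s1 : p0 * d <= p0 * (Z * X) by apply: ler_wpM2l.
  have s2 : p0 * (Z * X) <= Z * Y.
    have hZ : 0 <= Z by rewrite /Z addr_ge0 // ltW.
    by rewrite mulrCA; apply: ler_wpM2l.
  have s3 : Z * Y <= (k.+2)%:R * (d + K) * Y by apply: ler_wpM2r.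
  rewrite mulrAC; apply: le_trans s1 _; apply: le_trans s2 _; exact: s3.
have [N1 hN1] : exists N, forall n, (N <= n)%N -> `|m - v n| < eta / 4.
  move: hv' => /cvgr_dist_lt H1; have := H1 (eta / 4).
  move=> /(_ _) [|N _ HN]; first by rewrite divr_gt0.
  by exists N => n /HN.
set k := N1.
set eps := eta / (2 * (k.+2)%:R).
have heps : 0 < eps by rewrite /eps divr_gt0 // mulr_gt0.
have [N2 hN2] : exists N, forall n, (N <= n)%N -> `|1 - u n| < eps.
  move: hu => /cvgr_dist_lt H1; have := H1 eps.
  move=> /(_ heps) [N _ HN].
  by exists N => n /HN.
set t := (maxn N2 k.+2 - k.+2)%N.
have hN : (k.+2 + t = maxn N2 k.+2)%N by rewrite subnKC // leq_maxr.
have hvi := v_ineq (fr_ge0 pol y h0) k.+2 t.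
rewrite hN in hvi.
have e1 := hN2 (maxn N2 k.+2) (leq_maxl _ _).
have e2 := hN1 (maxn N2 k.+2) (leq_trans (leqW (leqW (leqnn _))) (leq_maxr _ _)).
have e3 := hN1 k.+2 (leqW (leqW (leqnn _))).
have e4 := hmain k.
move: hvi e1 e2 e3 e4.
rewrite /u /v.
set A := \sum_(n < maxn N2 k.+2) first_return Pt pol y n.
set B := \sum_(n < k.+2) first_return Pt pol y n.
set A' := \sum_(n < maxn N2 k.+2) _.
set B' := \sum_(n < k.+2) _.
move=> hvi e1 e2 e3 e4.
have e1' : 1 - A < eps by apply: le_lt_trans e1; exact: ler_norm.
have e2' : A' - m <= `|m - A'| by rewrite distrC ler_norm.
have e3' : m - B' <= `|m - B'| by rewrite ler_norm.
have hP : 0 < (k.+2)%:R :> R by [].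
have hPe : (k.+2)%:R * eps = eta / 2.
  rewrite /eps invfM mulrCA [(k.+2)%:R * _]mulrCA divff ?mulr1 //; exact: lt0r_neq0.
have f1 : A' - B' < eta / 4 + eta / 4.
  have -> : A' - B' = (A' - m) + (m - B') by rewrite addrA subrK.
  apply: le_lt_trans (lerD e2' e3') _; exact: ltrD.
have f2 : (k.+2)%:R * (1 - A) < eta / 2.
  by rewrite -hPe ltr_pM2l.
clear e2 e3 e2' e3' hv' hv hu hN1 hN2.
have f3 : (k.+2)%:R * (A - B) = (k.+2)%:R * (1 - B) - (k.+2)%:R * (1 - A).
  by rewrite -mulrBr; congr (_ * _); lra.
exact: (fin_contra heta f3 hvi f1 f2 e4).
Qed.
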